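(* Let $\varphi:VB_n\to\mathrm{Aut}(F_n)$ be the homomorphism with $\varphi(\sigma_i)=\sigma_i$ and $\varphi(\rho_i)=\alpha_i$ (as automorphisms below), $i=1,\dots,n-1$. Then $\varphi(VP_n)=Cb_n$ and $\varphi(V_i^* )=D_i$ for $i=1,\dots,n-1$.
   Context: The virtual braid group $VB_n$ has generators $\sigma_1,\dots,\sigma_{n-1},\rho_1,\dots,\rho_{n-1}$ and defining relations: $\sigma_i\sigma_{i+1}\sigma_i=\sigma_{i+1}\sigma_i\sigma_{i+1}$, $\sigma_i\sigma_j=\sigma_j\sigma_i$ ($|i-j|\ge2$); $\rho_i\rho_{i+1}\rho_i=\rho_{i+1}\rho_i\rho_{i+1}$, $\rho_i\rho_j=\rho_j\rho_i$ ($|i-j|\ge2$), $\rho_i^2=1$; $\sigma_i\rho_j=\rho_j\sigma_i$ ($|i-j|\ge2$), $\rho_i\rho_{i+1}\sigma_i=\sigma_{i+1}\rho_i\rho_{i+1}$. $VP_n$ is the kernel of $VB_n\to S_n$, $\sigma_i,\rho_i\mapsto(i,i+1)$. Set $\lambda_{i,i+1}=\rho_i\sigma_i^{-1}$, $\lambda_{i+1,i}=\sigma_i^{-1}\rho_i$, and for $1\le i<j-1\le n-1$: $\lambda_{ij}=\rho_{j-1}\cdots\rho_{i+1}\lambda_{i,i+1}\rho_{i+1}\cdots\rho_{j-1}$, $\lambda_{ji}=\rho_{j-1}\cdots\rho_{i+1}\lambda_{i+1,i}\rho_{i+1}\cdots\rho_{j-1}$. $V_i$ is the subgroup generated by $\lambda_{1,i+1},\dots,\lambda_{i,i+1},\lambda_{i+1,1},\dots,\lambda_{i+1,i}$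 and $V_i^*$ its normal closure in $\langle\lambda_{kl}:k,l\le i+1\rangle$. Let $F_n=\langle x_1,\dots,x_n\rangle$ be free. The automorphism $\sigma_i$ sends $x_i\mapsto x_ix_{i+1}x_i^{-1}$, $x_{i+1}\mapsto x_i$, fixing other $x_l$; $\alpha_i$ swaps $x_i,x_{i+1}$ and fixes the others; $\varepsilon_{ij}$ ($i\ne j$) sends $x_i\mapsto x_j^{-1}x_ix_j$ and fixes $x_l$, $l\ne i$. (These assignments define a homomorphism $\varphi$; its image is the welded braid group $WB_n$, the group of conjugating automorphisms.) $Cb_n=\langle\varepsilon_{ij}:1\le i\ne j\le n\rangle$ and $D_i=\langle\varepsilon_{i+1,1},\dots,\varepsilon_{i+1,i},\varepsilon_{1,i+1},\dots,\varepsilon_{i,i+1}\rangle$. *)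

(* Defs.v *)
(* Concrete combinatorial model:
   - elements of F_n are words over letters (k, b) = x_k^{+1} (b = true) / x_k^{-1};
   - an endomorphism of F_n is given by images of generators and acts on words
     by substitution followed by free reduction;
   - elements of VB_n are represented by words in the generators
     sigma_i^{+-1}, rho_i; phi is evaluated on such words. *)
From mathcomp Require Import all_boot.
Set Implicit Arguments. Unset Strict Implicit. Unset Printing Implicit Defensive.

Definition letter := (nat * bool)%type.
Definition fword := seq letter.
Definition linv (a : letter) : letter := (a.1, ~~ a.2).
Definition winv (w : fword) : fword := rev (map linv w).
Definition red_cons (a : letter) (s : fword) : fword :=
  if s is b :: s' then (if (a.1 == b.1) && (a.2 != b.2) then s' else a :: s)
  else [:: a].
Definition reduce (w : fword) : fword := foldr red_cons [::] w.
Definition subst (img : nat -> fword) (w : fword) : fword :=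
  reduce (flatten (map (fun a => if a.2 then img a.1 else winv (img a.1)) w)).

Definition aut := fword -> fword.
Definition xp (k : nat) : letter := (k, true).
Definition xm (k : nat) : letter := (k, false).
Definition inFn (n : nat) (w : fword) : bool := all (fun a => 0 < a.1 <= n) w.
Definition aut_eq (n : nat) (f g : aut) : Prop :=
  forall w, inFn n w -> f w = g w.

Definition img_sigma (i k : nat) : fword :=
  if k == i then [:: xp i; xp i.+1; xm i]
  else if k == i.+1 then [:: xp i] else [:: xp k].
Definition img_sigma_inv (i k : nat) : fword :=
  if k == i then [:: xp i.+1]
  else if k == i.+1 then [:: xm i.+1; xp i; xp i.+1] else [:: xp k].
Definition img_alpha (i k : nat) : fword :=
  if k == i then [:: xp i.+1] else if k == i.+1 then [:: xp i] else [:: xp k].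
Definition img_eps (i j k : nat) : fword :=
  if k == i then [:: xm j; xp i; xp j] else [:: xp k].
Definition img_eps_inv (i j k : nat) : fword :=
  if k == i then [:: xp j; xp i; xm j] else [:: xp k].

(* Sig i true = sigma_i, Sig i false = sigma_i^{-1}, Rho i = rho_i *)
Inductive vbgen := Sig of nat & bool | Rho of nat.
Definition vb_idx (g : vbgen) : nat := match g with Sig i _ => i | Rho i => i end.
Definition vb_valid (n : nat) (w : seq vbgen) : bool :=
  all (fun g => 0 < vb_idx g < n) w.
Definition vb_ginv (g : vbgen) : vbgen :=
  match g with Sig i b => Sig i (~~ b) | Rho i => Rho i end.
Definition vb_inv (w : seq vbgen) : seq vbgen := rev (map vb_ginv w).

Definition vb_act (g : vbgen) : aut :=
  match g with
  | Sig i true => subst (img_sigma i)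
  | Sig i false => subst (img_sigma_inv i)
  | Rho i => subst (img_alpha i)
  end.
Definition phiw (w : seq vbgen) : aut :=
  foldr (fun g f => fun u => vb_act g (f u)) id w.

(* the map VB_n -> S_n : sigma_i, rho_i |-> (i, i+1) *)
Definition swapn (i k : nat) : nat :=
  if k == i then i.+1 else if k == i.+1 then i else k.
Definition permw (w : seq vbgen) : nat -> nat :=
  foldr (fun g p => fun k => swapn (vb_idx g) (p k)) id w.
Definition VPword (n : nat) (w : seq vbgen) : Prop :=
  vb_valid n w /\ forall k, permw w k = k.

Inductive gen (S : seq vbgen -> Prop) : seq vbgen -> Prop :=
| gen_nil : gen S [::]
| gen_in w : S w -> gen S w
| gen_cat u v : gen S u -> gen S v -> gen S (u ++ v)
| gen_inv u : gen S u -> gen S (vb_inv u).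

Definition lamw (a b : nat) : seq vbgen :=
  if a < b then
    map Rho (rev (iota a.+1 (b - a - 1))) ++ [:: Rho a; Sig a false]
      ++ map Rho (iota a.+1 (b - a - 1))
  else if b < a then
    map Rho (rev (iota b.+1 (a - b - 1))) ++ [:: Sig b false; Rho b]
      ++ map Rho (iota b.+1 (a - b - 1))
  else [::].

Definition Lam_set (i : nat) (w : seq vbgen) : Prop :=
  exists k l, [/\ 0 < k <= i.+1, 0 < l <= i.+1, k != l & w = lamw k l].
Definition V_set (i : nat) (w : seq vbgen) : Prop :=
  exists k, 0 < k <= i /\ (w = lamw k i.+1 \/ w = lamw i.+1 k).
(* V_i^* : normal closure of V_i in <lambda_kl : k,l <= i+1>,
   i.e. the subgroup generated by g h g^{-1}, g in <Lam_set i>, h in V_i *)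
Definition Vstar (i : nat) : seq vbgen -> Prop :=
  gen (fun w => exists g h, [/\ gen (Lam_set i) g, gen (V_set i) h &
                                 w = g ++ h ++ vb_inv g]).

Definition phi_img (n : nat) (S : seq vbgen -> Prop) (f : aut) : Prop :=
  exists w, S w /\ aut_eq n f (phiw w).

(* ((i, j), true) = epsilon_ij, ((i, j), false) = epsilon_ij^{-1} *)
Definition epsw (u : seq (nat * nat * bool)) : aut :=
  foldr (fun e f => fun v =>
           subst (if e.2 then img_eps e.1.1 e.1.2 else img_eps_inv e.1.1 e.1.2)
                 (f v)) id u.
Definition Cb_set (n : nat) (f : aut) : Prop :=
  exists u, all (fun e : nat * nat * bool =>
                   [&& 0 < e.1.1 <= n, 0 < e.1.2 <= n & e.1.1 != e.1.2]) u
            /\ aut_eq n f (epsw u).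
Definition D_set (n i : nat) (f : aut) : Prop :=
  exists u, all (fun e : nat * nat * bool =>
                   ((e.1.1 == i.+1) && (0 < e.1.2 <= i))
                   || ((e.1.2 == i.+1) && (0 < e.1.1 <= i))) u
            /\ aut_eq n f (epsw u).

(* Main.v *)
Require Import Defs.
From mathcomp Require Import all_boot.
From Stdlib Require Import Setoid Morphisms.
From mathcomp Require Import zify.
Set Implicit Arguments. Unset Strict Implicit. Unset Printing Implicit Defensive.

Definition rdd (s : fword) := sorted (fun x y => y != linv x) s.

Lemma linvK a : linv (linv a) = a.
Proof. by case: a => x b; rewrite /linv /= negbK. Qed.

Lemma red_consE a s : red_cons a s =
  if s is b :: s' then if b == linv a then s' else a :: s else [:: a].
Proof.
case: s => [|b s] //=; case: a b => [x u] [y v] /=.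
rewrite /linv /= xpair_eqE eq_sym.
by case: u; case: v.
Qed.

Lemma rdd_cons a s : rdd (a :: s) = (if s is b :: _ then b != linv a else true) && rdd s.
Proof. by case: s. Qed.

Lemma rdd_red_cons a s : rdd s -> rdd (red_cons a s).
Proof.
rewrite red_consE; case: s => [|b s] //.
case: ifP => [_|hb] H.
  by move: H; rewrite rdd_cons => /andP[].
by rewrite rdd_cons hb H.
Qed.

Lemma rdd_foldr u s : rdd s -> rdd (foldr red_cons s u).
Proof. by elim: u => //= a u IH /IH; apply: rdd_red_cons. Qed.

Lemma rdd_reduce w : rdd (reduce w).
Proof. exact: rdd_foldr. Qed.

Lemma reduce_rdd s : rdd s -> reduce s = s.
Proof.
elim: s => // a s IH H.
have Hs : rdd s by move: H; rewrite rdd_cons => /andP[].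
rewrite /= -/(reduce s) IH // red_consE.
case: s H {IH Hs} => // b s; rewrite rdd_cons => /andP[hb _].
by rewrite (negbTE hb).
Qed.

Lemma red_cons_inv a t : rdd t -> red_cons a (red_cons (linv a) t) = t.
Proof.
case: t => [|b t].
  by rewrite !red_consE eqxx.
rewrite rdd_cons => /andP [hb _].
rewrite [red_cons (linv a) _]red_consE linvK; case: eqP => [eb|ne]; first subst b.
  rewrite red_consE; case: t hb => // c t hc.
  by rewrite (negbTE hc).
by rewrite red_consE eqxx.
Qed.

Lemma F_red u s : rdd s -> foldr red_cons s u = foldr red_cons s (reduce u).
Proof.
move=> Hs; elim: u => // a u IH /=.
rewrite IH -/(reduce u).
have : rdd (reduce u) by apply: rdd_reduce.
case: (reduce u) => [|b r] // _.
rewrite [red_cons a (b :: r)]red_consE.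
case: eqP => [->|//].
rewrite /= red_cons_inv //.
exact: rdd_foldr.
Qed.

Lemma reduce_reduce w : reduce (reduce w) = reduce w.
Proof. exact: reduce_rdd (rdd_reduce w). Qed.

Lemma reduce_cat u v : reduce (u ++ v) = reduce (reduce u ++ reduce v).
Proof.
rewrite /reduce !foldr_cat -/(reduce v) -/(reduce (reduce v)) reduce_reduce.
by apply: F_red; apply: rdd_reduce.
Qed.

Lemma reduce_catl u v : reduce (reduce u ++ v) = reduce (u ++ v).
Proof. by rewrite reduce_cat reduce_reduce -reduce_cat. Qed.
Lemma reduce_catr u v : reduce (u ++ reduce v) = reduce (u ++ v).
Proof. by rewrite reduce_cat reduce_reduce -reduce_cat. Qed.

Lemma reduce_cancel x a y : reduce (x ++ a :: linv a :: y) = reduce (x ++ y).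
Proof.
rewrite reduce_cat [reduce (a :: _)]/= -/(reduce y) red_cons_inv ?rdd_reduce //.
by rewrite -reduce_cat.
Qed.

Lemma winvK w : winv (winv w) = w.
Proof. by rewrite /winv map_rev revK -map_comp map_id_in // => a _ /=; rewrite linvK. Qed.

Lemma winv_cat u v : winv (u ++ v) = winv v ++ winv u.
Proof. by rewrite /winv map_cat rev_cat. Qed.

Lemma winv_cons a w : winv (a :: w) = winv w ++ [:: linv a].
Proof. by rewrite -cat1s winv_cat. Qed.

Lemma reduce_winv_r w : reduce (w ++ winv w) = [::].
Proof.
elim: w => // a w IH.
rewrite winv_cons /= -/(reduce _) catA reduce_cat IH /=.
by rewrite eqxx; case: (a.2).
Qed.

Lemma reduce_winv_l w : reduce (winv w ++ w) = [::].
Proof. by rewrite -{2}(winvK w) reduce_winv_r. Qed.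

Lemma rdd_winv s : rdd s -> rdd (winv s).
Proof.
rewrite /rdd /winv rev_sorted sorted_map.
apply: sub_sorted => x y /=.
case: x y => [x u] [y v]; rewrite /linv /= !xpair_eqE.
by rewrite eq_sym; case: u; case: v.
Qed.

Lemma reduce_winv w : reduce (winv w) = winv (reduce w).
Proof.
rewrite -(cats0 (winv w)).
rewrite -(reduce_winv_r (reduce w)) reduce_catr catA -reduce_catl.
rewrite reduce_catr reduce_winv_l /=.
exact: reduce_rdd (rdd_winv (rdd_reduce w)).
Qed.

Definition himg (I : nat -> fword) (a : letter) : fword :=
  if a.2 then I a.1 else winv (I a.1).

Lemma substE I w : subst I w = reduce (flatten (map (himg I) w)).
Proof. by []. Qed.

Lemma rdd_subst I w : rdd (subst I w).
Proof. exact: rdd_reduce. Qed.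

Lemma reduce_subst I w : reduce (subst I w) = subst I w.
Proof. exact: reduce_reduce. Qed.

Lemma subst_nil I : subst I [::] = [::].
Proof. by []. Qed.

Lemma subst_cat I u v : subst I (u ++ v) = reduce (subst I u ++ subst I v).
Proof. by rewrite !substE map_cat flatten_cat reduce_cat. Qed.

Lemma subst_cons I a w : subst I (a :: w) = reduce (himg I a ++ subst I w).
Proof. by rewrite substE /= reduce_catr. Qed.

Lemma himg_linv I a : himg I (linv a) = winv (himg I a).
Proof. by rewrite /himg /=; case: (a.2) => //=; rewrite winvK. Qed.

Lemma subst_red_cons I a w : subst I (red_cons a w) = reduce (himg I a ++ subst I w).
Proof.
rewrite red_consE; case: w => [|b w].
  by rewrite subst_cons.
case: eqP => [->|_]; last by rewrite subst_cons.
rewrite subst_cons himg_linv reduce_catr catA -reduce_catl reduce_winv_r /=.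
by rewrite reduce_subst.
Qed.

Lemma subst_reduce I w : subst I (reduce w) = subst I w.
Proof.
elim: w => // a w IH.
by rewrite /= -/(reduce w) subst_red_cons IH subst_cons.
Qed.

Lemma winv_flatten (l : seq fword) : winv (flatten l) = flatten (rev (map winv l)).
Proof.
elim: l => // x l IH.
by rewrite /= winv_cat IH rev_cons flatten_rcons.
Qed.

Lemma subst_winv I w : subst I (winv w) = winv (subst I w).
Proof.
rewrite !substE -reduce_winv winv_flatten; congr reduce.
rewrite /winv map_rev -!map_comp; congr (flatten (rev _)).
by apply: eq_map => a /=; rewrite himg_linv.
Qed.

Lemma subst_comp I J w : subst I (subst J w) = subst (fun k => subst I (J k)) w.
Proof.
elim: w => // a w IH.
rewrite subst_cons subst_reduce subst_cat IH [RHS]subst_cons.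
congr (reduce (_ ++ _)).
rewrite /himg; case: (a.2) => //.
by rewrite subst_winv.
Qed.

Lemma subst_ext I J w : (forall k, reduce (I k) = reduce (J k)) -> subst I w = subst J w.
Proof.
move=> H; elim: w => // a w IH.
rewrite !subst_cons IH -reduce_catl [in RHS]/himg -[in RHS]reduce_catl.
rewrite /himg; case: (a.2); by rewrite ?reduce_winv H.
Qed.

Lemma subst_id w : subst (fun k => [:: xp k]) w = reduce w.
Proof.
rewrite substE; congr reduce.
elim: w => // [[x b]] w IH /=.
by rewrite IH; case: b.
Qed.

Definition img := nat -> fword.
Definition idI : img := fun k => [:: xp k].
Definition comp (I J : img) : img := fun k => subst I (J k).
Definition equiv (I J : img) := forall k, reduce (I k) = reduce (J k).
Infix "=~" := equiv (at level 70).

#[export] Instance equiv_Equiv : Equivalence equiv.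
Proof.
split.
- by move=> I k.
- by move=> I J H k; rewrite H.
- by move=> I J K H1 H2 k; rewrite H1 H2.
Qed.

Lemma subst_equiv I J w : I =~ J -> subst I w = subst J w.
Proof. exact: subst_ext. Qed.

#[export] Instance comp_Proper : Proper (equiv ==> equiv ==> equiv) comp.
Proof.
move=> I I' HI J J' HJ k; rewrite /comp !reduce_subst.
by rewrite -subst_reduce HJ subst_reduce (subst_equiv _ HI).
Qed.

Lemma compA I J K : comp (comp I J) K =~ comp I (comp J K).
Proof. by move=> k; rewrite /comp subst_comp. Qed.

Lemma comp1I I : comp idI I =~ I.
Proof. by move=> k; rewrite /comp subst_id reduce_reduce. Qed.

Lemma compI1 I : comp I idI =~ I.
Proof. by move=> k; rewrite /comp subst_cons /himg /= cats0 reduce_reduce. Qed.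

Lemma test I J K : I =~ J -> comp K (comp I idI) =~ comp K J.
Proof. move=> H. rewrite compI1 H. reflexivity. Qed.

Definition imgl (Is : seq img) : img := foldr comp idI Is.
Definition actl (Is : seq img) : aut := foldr (fun I f => fun v => subst I (f v)) id Is.

Lemma subst_actl I Is v : subst I (actl Is v) = subst (comp I (imgl Is)) v.
Proof.
elim: Is I => [|J Is IH] I /=.
  by apply: subst_ext => k; rewrite /comp subst_cons /= cats0 reduce_reduce.
rewrite subst_comp -/(comp I J) IH.
by apply: subst_equiv; rewrite compA.
Qed.

Lemma actl_cons I Is v : actl (I :: Is) v = subst (imgl (I :: Is)) v.
Proof. by rewrite /= subst_actl. Qed.

Lemma imgl_cat A B : imgl (A ++ B) =~ comp (imgl A) (imgl B).
Proof.
elim: A => [|I A IH] /=; first by rewrite comp1I.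
by rewrite IH compA.
Qed.

Definition gimg (g : vbgen) : img :=
  match g with Sig i true => img_sigma i | Sig i false => img_sigma_inv i
  | Rho i => img_alpha i end.
Definition eimg (e : nat * nat * bool) : img :=
  if e.2 then img_eps e.1.1 e.1.2 else img_eps_inv e.1.1 e.1.2.
Definition imgw w := imgl (map gimg w).
Definition imge u := imgl (map eimg u).

Lemma phiw_actl w v : phiw w v = actl (map gimg w) v.
Proof. by elim: w => //= [[i [] | i]] w ->. Qed.
Lemma epsw_actl u v : epsw u v = actl (map eimg u) v.
Proof. by elim: u => //= [[[i j] []]] u ->. Qed.

Lemma phiw_subst g w v : phiw (g :: w) v = subst (imgw (g :: w)) v.
Proof. by rewrite phiw_actl /= -actl_cons. Qed.
Lemma epsw_subst e u v : epsw (e :: u) v = subst (imge (e :: u)) v.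
Proof. by rewrite epsw_actl /= -actl_cons. Qed.

Lemma imgw_cat u v : imgw (u ++ v) =~ comp (imgw u) (imgw v).
Proof. by rewrite /imgw map_cat imgl_cat. Qed.
Lemma imge_cat u v : imge (u ++ v) =~ comp (imge u) (imge v).
Proof. by rewrite /imge map_cat imgl_cat. Qed.
Lemma imgw_cons g w : imgw (g :: w) = comp (gimg g) (imgw w).
Proof. by []. Qed.
Lemma imge_cons e u : imge (e :: u) = comp (eimg e) (imge u).
Proof. by []. Qed.
Lemma imge1 e : imge [:: e] =~ eimg e.
Proof. by rewrite imge_cons compI1. Qed.

Lemma neqC (x y : nat) : x != y -> (y == x) = false.
Proof. by rewrite eq_sym => /negbTE. Qed.

Ltac neqs := repeat match goal with
 | H : is_true (?x != ?y) |- context [?x == ?y] => rewrite (negbTE H)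
 | H : is_true (?x != ?y) |- context [?y == ?x] => rewrite (neqC H)
 end.
Ltac crunch := rewrite /comp /eimg /imge /imgl /= /comp /eimg /img_eps /img_eps_inv
  /img_alpha /img_sigma /img_sigma_inv /subst /himg /=;
  repeat (progress (rewrite /= ?eqxx ?andbT ?andbF; neqs)); try done.

Lemma sig_t i : img_sigma i =~ comp (img_eps_inv i.+1 i) (img_alpha i).
Proof.
have h1 : i != i.+1 by rewrite neq_ltn ltnSn.
have h2 : i.+1 != i by rewrite eq_sym.
move: h1 h2; rewrite /img_sigma /img_alpha; move: (i.+1) => j h1 h2.
move=> k; case: (eqVneq k i) => [->|?]; [|case: (eqVneq k j) => [->|?]]; crunch.
Qed.

Lemma sig_f i : img_sigma_inv i =~ comp (img_eps i i.+1) (img_alpha i).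
Proof.
have h1 : i != i.+1 by rewrite neq_ltn ltnSn.
have h2 : i.+1 != i by rewrite eq_sym.
move: h1 h2; rewrite /img_sigma_inv /img_alpha; move: (i.+1) => j h1 h2.
move=> k; case: (eqVneq k i) => [->|?]; [|case: (eqVneq k j) => [->|?]]; crunch.
Qed.

Lemma gimg_inv g : comp (gimg (vb_ginv g)) (gimg g) =~ idI.
Proof.
have h1 : forall i, i != i.+1 by move=> i; rewrite neq_ltn ltnSn.
case: g => [i [] | i] /=; move: (h1 i); rewrite /img_sigma_inv /img_sigma /img_alpha;
  move: (i.+1) => j h1' ; have h2 : j != i by rewrite eq_sym.
all: move=> k; case: (eqVneq k i) => [->|?]; [|case: (eqVneq k j) => [->|?]]; crunch.
Qed.

Definition P (p : nat -> nat) : img := fun k => [:: xp (p k)].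

Lemma alphaP i : img_alpha i =~ P (swapn i).
Proof. by move=> k; rewrite /img_alpha /P /swapn; case: ifP => _ //; case: ifP. Qed.

Lemma PP p q : comp (P p) (P q) =~ P (fun k => p (q k)).
Proof. by move=> k; rewrite /comp /P /subst. Qed.

Lemma Pid p : (forall k, p k = k) -> P p =~ idI.
Proof. by move=> H k; rewrite /P H. Qed.

Lemma P_eps p (pinj : injective p) e :
  comp (P p) (eimg e) =~ comp (eimg ((p e.1.1, p e.1.2), e.2)) (P p).
Proof.
case: e => [[a b] t] k /=; rewrite /eimg /=.
case: (eqVneq k a) => [->|ne].
  by case: t; rewrite /comp /P /img_eps /img_eps_inv /subst /himg /= ?eqxx.
have ne' : p k != p a by rewrite (inj_eq pinj).
by case: t; rewrite /comp /P /img_eps /img_eps_inv (negbTE ne) /subst /himg /= (negbTE ne').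
Qed.

Lemma eps_inv a b t : a != b -> comp (eimg ((a, b), t)) (eimg ((a, b), ~~ t)) =~ idI.
Proof.
move=> ab; have ba : b != a by rewrite eq_sym.
by case: t => k; (case: (eqVneq k a) => [->|?]; [|case: (eqVneq k b) => [->|?]]); crunch.
Qed.


Lemma eps_comm a b c d t s : a != b -> c != d -> a != c -> a != d -> c != b ->
  imge [:: ((a, b), t); ((c, d), s)] =~ imge [:: ((c, d), s); ((a, b), t)].
Proof.
move=> ab cd ac ad cb k.
case: t; case: s; (case: (eqVneq k a) => [->|?]; [|case: (eqVneq k c) => [->|?]]).
all: crunch.
Qed.

Lemma conjA p q c t td : p != q -> p != c -> q != c ->
  imge [:: ((p, q), t); ((c, p), td); ((p, q), ~~ t)] =~
  imge [:: ((c, q), ~~ t); ((c, p), td); ((c, q), t)].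
Proof.
move=> pq pc qc.
case: t; case: td => k; (case: (eqVneq k p) => [->|?]; [|case: (eqVneq k q) => [->|?]; [|case: (eqVneq k c) => [->|?]]]).
all: crunch.
Qed.

Lemma conjB p q c t td : p != q -> p != c -> q != c ->
  imge [:: ((p, q), t); ((p, c), td); ((p, q), ~~ t)] =~
  imge [:: ((c, q), ~~ t); ((p, c), td); ((c, q), t)].
Proof.
move=> pq pc qc.
case: t; case: td => k; (case: (eqVneq k p) => [->|?]; [|case: (eqVneq k q) => [->|?]; [|case: (eqVneq k c) => [->|?]]]).
all: crunch.
Qed.

Lemma relC p q c s td : p != q -> p != c -> q != c ->
  imge [:: ((p, c), td); ((q, c), td); ((p, q), s)] =~
  imge [:: ((p, q), s); ((p, c), td); ((q, c), td)].
Proof.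
move=> pq pc qc.
case: s; case: td => k; (case: (eqVneq k p) => [->|?]; [|case: (eqVneq k q) => [->|?]; [|case: (eqVneq k c) => [->|?]]]).
all: crunch.
Qed.

Definition flipe (e : nat * nat * bool) : nat * nat * bool := (e.1, ~~ e.2).

Lemma flipeK e : flipe (flipe e) = e.
Proof. by case: e => [[a b] t]; rewrite /flipe /= negbK. Qed.

Lemma imge_nil : imge [::] = idI.
Proof. by []. Qed.

Lemma imge_congr u v x y : imge x =~ imge y -> imge (u ++ x ++ v) =~ imge (u ++ y ++ v).
Proof. by move=> H; rewrite !imge_cat H. Qed.

Lemma imge_pair e : e.1.1 != e.1.2 -> imge [:: e; flipe e] =~ idI.
Proof.
case: e => [[a b] t] /= ab.
by rewrite imge_cons imge1 eps_inv.
Qed.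

Lemma imge_cancel u v e : e.1.1 != e.1.2 -> imge (u ++ [:: e; flipe e] ++ v) =~ imge (u ++ v).
Proof.
move=> H; rewrite (imge_congr u v (y := [::])) //.
by rewrite imge_pair.
Qed.

Lemma imge_cancel' u v e : e.1.1 != e.1.2 -> imge (u ++ [:: flipe e; e] ++ v) =~ imge (u ++ v).
Proof.
move=> H; rewrite -{2}(flipeK e); exact: imge_cancel.
Qed.

Lemma conjC p q c t td : p != q -> p != c -> q != c ->
  imge [:: ((p, q), t); ((q, c), td); ((p, q), ~~ t)] =~
  imge [:: ((c, q), ~~ t); ((p, c), ~~ td); ((c, q), t); ((p, c), td); ((q, c), td)].
Proof.
move=> pq pc qc.
have pc' : ((p, c), ~~ td).1.1 != ((p, c), ~~ td).1.2 by [].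
rewrite -(imge_cancel [:: ((p, q), t)] [:: ((q, c), td); ((p, q), ~~ t)] pc').
rewrite /flipe /= negbK.
have -> : [:: ((p, q), t); ((p, c), ~~ td); ((p, c), td); ((q, c), td); ((p, q), ~~ t)] =
   [:: ((p, q), t); ((p, c), ~~ td)] ++ [:: ((p, c), td); ((q, c), td); ((p, q), ~~ t)] ++ [::] by [].
rewrite imge_congr; last exact: relC.
have -> : [:: ((p, q), t); ((p, c), ~~ td)] ++ [:: ((p, q), ~~ t); ((p, c), td); ((q, c), td)] ++ [::]
  = [::] ++ [:: ((p, q), t); ((p, c), ~~ td); ((p, q), ~~ t)] ++ [:: ((p, c), td); ((q, c), td)] by [].
by rewrite imge_congr; last exact: conjB.
Qed.

Definition cbv n (e : nat * nat * bool) :=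
  [&& 0 < e.1.1 <= n, 0 < e.1.2 <= n & e.1.1 != e.1.2].
Definition ren (p : nat -> nat) (e : nat * nat * bool) : nat * nat * bool :=
  ((p e.1.1, p e.1.2), e.2).

Lemma P_imge p (pinj : injective p) u :
  comp (P p) (imge u) =~ comp (imge (map (ren p) u)) (P p).
Proof.
elim: u => [|e u IH].
  by rewrite /= compI1 comp1I.
rewrite map_cons !imge_cons -compA (P_eps pinj) compA IH -compA.
by [].
Qed.

Lemma swapnK i : involutive (swapn i).
Proof.
have h1 : (i.+1 == i) = false by rewrite gtn_eqF.
have h2 : (i == i.+1) = false by rewrite ltn_eqF.
move=> k; rewrite /swapn.
case: (eqVneq k i) => [->|ki]; first by rewrite h1 eqxx.
case: (eqVneq k i.+1) => [->|ki1]; first by rewrite eqxx.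
by rewrite (negbTE ki) (negbTE ki1).
Qed.

Lemma swapn_inj i : injective (swapn i).
Proof. exact: can_inj (swapnK i). Qed.

Lemma swapn_range n i k : 0 < i < n -> 0 < k <= n -> 0 < swapn i k <= n.
Proof.
move=> /andP[i0 iN] /andP[k0 kN]; rewrite /swapn.
case: ifP => _; first by rewrite /= iN.
case: ifP => _; first by rewrite i0 (ltnW iN).
by rewrite k0 kN.
Qed.

Lemma cbv_ren n i e : 0 < i < n -> cbv n e -> cbv n (ren (swapn i) e).
Proof.
move=> hi /and3P[h1 h2 h3]; rewrite /cbv /ren /=.
by rewrite !swapn_range // (inj_eq (@swapn_inj i)) h3.
Qed.

Lemma gimg_dec n g : 0 < vb_idx g < n ->
  exists ug, all (cbv n) ug /\ gimg g =~ comp (imge ug) (P (swapn (vb_idx g))).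
Proof.
case: g => [i [] | i] /= /andP[i0 iN].
- exists [:: ((i.+1, i), false)]; split.
    by rewrite /= /cbv /= iN i0 (ltnW iN) gtn_eqF.
  by rewrite imge1 -alphaP sig_t.
- exists [:: ((i, i.+1), true)]; split.
    by rewrite /= /cbv /= iN i0 (ltnW iN) ltn_eqF.
  by rewrite imge1 -alphaP sig_f.
- exists [::]; split => //.
  by rewrite imge_nil comp1I alphaP.
Qed.

Lemma fwd1 n w : vb_valid n w ->
  exists u, all (cbv n) u /\ imgw w =~ comp (imge u) (P (permw w)).
Proof.
elim: w => [|g w IH] /=.
  move=> _; exists [::]; split => //.
move=> /andP[hg /IH [u [hu Hu]]].
have [ug [hug Hug]] := gimg_dec hg.
exists (ug ++ map (ren (swapn (vb_idx g))) u); split.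
  rewrite all_cat hug /=; apply/allP => e /mapP[e' he' ->].
  by apply: cbv_ren => //; move/allP: hu; apply.
rewrite imgw_cons Hug Hu imge_cat.
rewrite compA -(compA (P _)) (P_imge (@swapn_inj _)).
rewrite -compA -compA compA PP.
by [].
Qed.

Lemma vb_ginvK g : vb_ginv (vb_ginv g) = g.
Proof. by case: g => //= i b; rewrite negbK. Qed.

Lemma vb_invK w : vb_inv (vb_inv w) = w.
Proof.
rewrite /vb_inv map_rev revK -map_comp.
by elim: w => //= g w ->; rewrite vb_ginvK.
Qed.

Lemma vb_inv_cons g w : vb_inv (g :: w) = vb_inv w ++ [:: vb_ginv g].
Proof. by rewrite /vb_inv /= rev_cons cats1. Qed.

Lemma vb_inv_cat u v : vb_inv (u ++ v) = vb_inv v ++ vb_inv u.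
Proof. by rewrite /vb_inv map_cat rev_cat. Qed.

Lemma imgw1 g : imgw [:: g] =~ gimg g.
Proof. by rewrite imgw_cons compI1. Qed.

Lemma imgw_inv w : comp (imgw (vb_inv w)) (imgw w) =~ idI.
Proof.
elim: w => [|g w IH]; first by rewrite /= comp1I.
rewrite vb_inv_cons imgw_cat imgw1 imgw_cons.
by rewrite compA -(compA (gimg _)) gimg_inv comp1I IH.
Qed.

Lemma imgw_inv' w : comp (imgw w) (imgw (vb_inv w)) =~ idI.
Proof. by rewrite -{1}(vb_invK w) imgw_inv. Qed.

Lemma inv_unique A B B' : comp A B =~ idI -> comp B' A =~ idI -> B =~ B'.
Proof.
move=> h1 h2.
by rewrite -(comp1I B) -h2 compA h1 compI1.
Qed.

Lemma permw_cat u v k : permw (u ++ v) k = permw u (permw v k).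
Proof. by elim: u => //= g u ->. Qed.

Lemma permw_inv w k : permw (vb_inv w) (permw w k) = k.
Proof.
elim: w k => //= g w IH k.
rewrite vb_inv_cons permw_cat /=.
have -> : vb_idx (vb_ginv g) = vb_idx g by case: g.
by rewrite swapnK IH.
Qed.


Definition Gl (l : seq nat) (k : nat) := foldl (fun k x => swapn x k) k l.

Lemma PPs x : comp (P (swapn x)) (P (swapn x)) =~ idI.
Proof. by rewrite PP Pid // => k; rewrite swapnK. Qed.

Lemma conj_rho l m c d t : imgw m =~ eimg ((c, d), t) ->
  imgw (map Rho (rev l) ++ m ++ map Rho l) =~ eimg ((Gl l c, Gl l d), t).
Proof.
elim: l m c d => [|x l IH] m c d H.
  by rewrite /= cats0.
rewrite rev_cons map_rcons -cats1 -!catA.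
rewrite (_ : [:: Rho x] ++ m ++ Rho x :: map Rho l = (Rho x :: m ++ [:: Rho x]) ++ map Rho l);
  last by rewrite /= -catA.
change (Gl (x :: l) c) with (Gl l (swapn x c)).
change (Gl (x :: l) d) with (Gl l (swapn x d)).
apply: IH.
rewrite imgw_cons imgw_cat imgw1 H /= alphaP.
rewrite -compA (P_eps (@swapn_inj x)) compA PPs compI1.
by [].
Qed.

Lemma conj_rho_perm l m : (forall k, permw m k = k) ->
  forall k, permw (map Rho (rev l) ++ m ++ map Rho l) k = k.
Proof.
elim: l m => [|x l IH] m H k.
  by rewrite /= cats0 H.
rewrite rev_cons map_rcons -cats1 -!catA.
rewrite (_ : [:: Rho x] ++ m ++ Rho x :: map Rho l = (Rho x :: m ++ [:: Rho x]) ++ map Rho l);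
  last by rewrite /= -catA.
apply: IH => k'.
by rewrite /= permw_cat /= H swapnK.
Qed.

Lemma Gl_iota s m : Gl (iota s m) s = s + m.
Proof.
elim: m s => [|m IH] s; first by rewrite addn0.
by rewrite /Gl /= /swapn eqxx -/(Gl _ _) IH addSnnS.
Qed.

Lemma Gl_iota_lt s m k : k < s -> Gl (iota s m) k = k.
Proof.
elim: m s => [|m IH] s ks //.
rewrite /Gl /= /swapn ltn_eqF // ltn_eqF; last by rewrite ltnS ltnW.
by rewrite -/(Gl _ _) IH // ltnS ltnW.
Qed.

Lemma mid1 a : imgw [:: Rho a; Sig a false] =~ eimg ((a.+1, a), true).
Proof.
have h1 : a != a.+1 by rewrite neq_ltn ltnSn.
have h2 : a.+1 != a by rewrite eq_sym.
rewrite /imgw /imgl /= /eimg /=.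
move: h1 h2; rewrite /img_sigma_inv /img_alpha; move: (a.+1) => j h1 h2.
move=> k; case: (eqVneq k a) => [->|?]; [|case: (eqVneq k j) => [->|?]]; crunch.
Qed.

Lemma mid2 a : imgw [:: Sig a false; Rho a] =~ eimg ((a, a.+1), true).
Proof.
have h1 : a != a.+1 by rewrite neq_ltn ltnSn.
have h2 : a.+1 != a by rewrite eq_sym.
rewrite /imgw /imgl /= /eimg /=.
move: h1 h2; rewrite /img_sigma_inv /img_alpha; move: (a.+1) => j h1 h2.
move=> k; case: (eqVneq k a) => [->|?]; [|case: (eqVneq k j) => [->|?]]; crunch.
Qed.

Lemma lamw_img a b : a != b -> imgw (lamw a b) =~ eimg ((b, a), true).
Proof.
move=> ab; rewrite /lamw.
case: (ltngtP a b) => [lt|gt|eq]; last by rewrite eq eqxx in ab.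
- rewrite (conj_rho _ (mid1 a)) Gl_iota Gl_iota_lt //.
  by have -> : a.+1 + (b - a - 1) = b by lia.
- rewrite (conj_rho _ (mid2 b)) Gl_iota Gl_iota_lt //.
  by have -> : b.+1 + (a - b - 1) = a by lia.
Qed.

Lemma lamw_perm a b k : permw (lamw a b) k = k.
Proof.
rewrite /lamw.
case: (ltngtP a b) => _ //; apply: conj_rho_perm => k' /=; by rewrite swapnK.
Qed.

Lemma lamw_valid n a b : 0 < a <= n -> 0 < b <= n -> vb_valid n (lamw a b).
Proof.
move=> ha hb; rewrite /lamw /vb_valid.
case: (ltngtP a b) => h //; rewrite !all_cat !all_map all_rev /=;
  (apply/and3P; split; [apply/allP => x; rewrite mem_iota /= | | apply/allP => x; rewrite mem_iota /=]); lia.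
Qed.

Lemma lamw_nil a b : a != b -> exists g w, lamw a b = g :: w.
Proof.
move=> ab; rewrite /lamw.
case: (ltngtP a b) => h; last by rewrite h eqxx in ab.
  by case: (map Rho (rev _)) => [|g w] /=; do 2 eexists.
by case: (map Rho (rev _)) => [|g w] /=; do 2 eexists.
Qed.

Definition wd (e : nat * nat * bool) : seq vbgen :=
  if e.2 then lamw e.1.2 e.1.1 else vb_inv (lamw e.1.2 e.1.1).

Lemma wd_img e : e.1.1 != e.1.2 -> imgw (wd e) =~ eimg e.
Proof.
case: e => [[x y] t] /= xy; have yx : y != x by rewrite eq_sym.
rewrite /wd /=; case: t; first exact: lamw_img.
apply: (inv_unique (A := imgw (lamw y x))); first exact: imgw_inv'.
by rewrite lamw_img // (eps_inv false xy).
Qed.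

Lemma flat_img u : all (fun e => e.1.1 != e.1.2) u ->
  imgw (flatten (map wd u)) =~ imge u.
Proof.
elim: u => [|e u IH] //= /andP[he hu].
by rewrite imgw_cat wd_img // IH.
Qed.

Lemma vb_valid_inv n w : vb_valid n (vb_inv w) = vb_valid n w.
Proof.
rewrite /vb_valid /vb_inv all_rev all_map.
by apply: eq_all => g /=; case: g.
Qed.

Lemma VP_nil n : VPword n [::].
Proof. by split. Qed.

Lemma VP_cat n u v : VPword n u -> VPword n v -> VPword n (u ++ v).
Proof.
move=> [hu pu] [hv pv]; split; first by rewrite /vb_valid all_cat; apply/andP.
by move=> k; rewrite permw_cat pv pu.
Qed.

Lemma VP_wd n e : cbv n e -> VPword n (wd e).
Proof.
case: e => [[x y] t] /and3P[hx hy xy]; rewrite /= in hx hy xy.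
have hl : VPword n (lamw y x) by split; [exact: lamw_valid | exact: lamw_perm].
rewrite /wd /=; case: t => //.
case: hl => hv hp; split; first by rewrite vb_valid_inv.
by move=> k; rewrite -{1}(hp k) permw_inv.
Qed.

Lemma VP_flat n u : all (cbv n) u -> VPword n (flatten (map wd u)).
Proof.
elim: u => [|e u IH] /=; first by move=> _; exact: VP_nil.
by move=> /andP[he hu]; apply: VP_cat; [exact: VP_wd | exact: IH].
Qed.

Lemma wd_nonnil e : e.1.1 != e.1.2 -> exists g w, wd e = g :: w.
Proof.
case: e => [[x y] t] /= xy; have yx : y != x by rewrite eq_sym.
have [g [w Hw]] := lamw_nil yx.
rewrite /wd /= Hw; case: t; first by do 2 eexists.
rewrite vb_inv_cons; case: (vb_inv w) => [|g' w'] /=; by do 2 eexists.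
Qed.

Lemma cbv_neq n u : all (cbv n) u -> all (fun e => e.1.1 != e.1.2) u.
Proof. by apply: sub_all => e /and3P[]. Qed.

Lemma part1b n f : Cb_set n f -> phi_img n (VPword n) f.
Proof.
move=> [u [hu Hf]].
case: u hu Hf => [|e u] hu Hf.
  by exists [::]; split; [exact: VP_nil | exact: Hf].
have hu' := cbv_neq hu.
have he : e.1.1 != e.1.2 by case/andP: hu'.
have [g [w Hw]] := wd_nonnil he.
exists (g :: w ++ flatten (map wd u)); split.
  by rewrite -cat_cons -Hw; exact: (VP_flat hu).
move=> v hv; rewrite Hf // epsw_subst phiw_subst; apply: subst_equiv.
by rewrite -cat_cons -Hw -[wd e ++ _]/(flatten (map wd (e :: u))) flat_img.
Qed.

Lemma part1f n f : phi_img n (VPword n) f -> Cb_set n f.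
Proof.
move=> [w [[hv hp] Hf]].
case: w hv hp Hf => [|g w] hv hp Hf.
  by exists [::]; split.
have [u [hu Hu]] := fwd1 hv.
have n2 : 1 < n by case/andP: hv => /andP[h1 h2] _; lia.
exists [:: ((2, 1), true), ((2, 1), false) & u]; split.
  by rewrite /= hu /cbv /=; apply/and3P; split => //; lia.
move=> v hv'; rewrite Hf // phiw_subst epsw_subst; apply: subst_equiv.
rewrite Hu (Pid hp) compI1.
have := imge_cancel [::] u (e := ((2, 1), true)) erefl.
by rewrite /flipe /= => ->.
Qed.

Definition dv i (e : nat * nat * bool) : bool :=
  ((e.1.1 == i.+1) && (0 < e.1.2 <= i)) || ((e.1.2 == i.+1) && (0 < e.1.1 <= i)).
Definition DG i (I : img) := exists u, all (dv i) u /\ I =~ imge u.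

Lemma dv_neq i e : dv i e -> e.1.1 != e.1.2.
Proof. case: e => [[x y] t]; rewrite /dv /= => /orP[] /andP[/eqP -> h]; lia. Qed.

Lemma dv_flip i e : dv i (flipe e) = dv i e.
Proof. by []. Qed.

Lemma DG_equiv i I J : I =~ J -> DG i J -> DG i I.
Proof. by move=> H [u [hu Hu]]; exists u; split => //; rewrite H. Qed.

Lemma DG_comp i I J : DG i I -> DG i J -> DG i (comp I J).
Proof.
move=> [u [hu Hu]] [v [hv Hv]]; exists (u ++ v); split.
  by rewrite all_cat hu hv.
by rewrite imge_cat Hu Hv.
Qed.

Lemma DG_id i : DG i idI.
Proof. by exists [::]. Qed.

Definition einv (u : seq (nat * nat * bool)) := rev (map flipe u).

Lemma einvK u : einv (einv u) = u.
Proof.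
rewrite /einv map_rev revK -map_comp.
by elim: u => //= e u ->; rewrite flipeK.
Qed.

Lemma imge_einv u : all (fun e => e.1.1 != e.1.2) u -> comp (imge (einv u)) (imge u) =~ idI.
Proof.
elim: u => [|e u IH] /=; first by rewrite comp1I.
move=> /andP[he hu].
rewrite /einv /= rev_cons -cats1 -/(einv u) imge_cat imge1 imge_cons.
rewrite compA -(compA (eimg _)).
have := eps_inv (~~ e.2) he; rewrite negbK.
case: e he => [[x y] t] /= he -> .
by rewrite comp1I IH.
Qed.

Lemma all_einv (p : pred (nat * nat * bool)) u :
  (forall e, p (flipe e) = p e) -> all p (einv u) = all p u.
Proof. by move=> H; rewrite /einv all_rev all_map; apply: eq_all => e /=. Qed.

Lemma DG_inv i I J : DG i I -> comp J I =~ idI -> DG i J.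
Proof.
move=> [u [hu Hu]] HJ; exists (einv u); split.
  by rewrite all_einv.
have hn : all (fun e => e.1.1 != e.1.2) u by apply: sub_all hu => e; apply: dv_neq.
have hn' : all (fun e => e.1.1 != e.1.2) (einv u) by rewrite all_einv.
rewrite -(compI1 J) -(imge_einv hn') einvK -compA -Hu HJ comp1I.
by [].
Qed.

Lemma DG_gen i S w : (forall w, S w -> DG i (imgw w)) -> gen S w -> DG i (imgw w).
Proof.
move=> HS; elim => [|u /HS //|u v _ Hu _ Hv|u _ Hu].
- exact: DG_id.
- by apply: DG_equiv (imgw_cat u v) _; apply: DG_comp.
- by apply: DG_inv Hu (imgw_inv u).
Qed.

Definition lv i (e : nat * nat * bool) :=
  [&& 0 < e.1.1 <= i.+1, 0 < e.1.2 <= i.+1 & e.1.1 != e.1.2].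

Lemma comm3 e d : imge [:: e; d] =~ imge [:: d; e] -> e.1.1 != e.1.2 ->
  imge [:: e; d; flipe e] =~ imge [:: d].
Proof.
move=> H he.
rewrite -[[:: e; d; flipe e]]/([::] ++ [:: e; d] ++ [:: flipe e]) imge_congr //.
by rewrite -[[::] ++ _]/([:: d] ++ [:: e; flipe e] ++ [::]) imge_cancel // cats0.
Qed.

Lemma Cj_base i e d : lv i e -> dv i d ->
  exists v, all (dv i) v /\ imge [:: e; d; flipe e] =~ imge v.
Proof.
move=> hl hd.
case: (boolP (dv i e)) => hde.
  exists [:: e; d; flipe e]; split => //.
  by rewrite /= hde hd dv_flip hde.
case: e hl hde => [[p q] t] /and3P[hp hq pq] hde; rewrite /= in hp hq pq.
have [hp' hq'] : p <= i /\ q <= i.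
  move: hde; rewrite /dv /= => hde.
  split; apply/negP => /negP; rewrite -ltnNge => h.
    have ep : p = i.+1 by lia.
    by move: hde; rewrite ep eqxx /=; move: pq; rewrite ep; lia.
  have eq : q = i.+1 by lia.
  by move: hde; rewrite eq eqxx /= orbC /=; move: pq; rewrite eq; lia.
have pc : p != i.+1 by rewrite neq_ltn ltnS hp'.
have qc : q != i.+1 by rewrite neq_ltn ltnS hq'.
case: d hd => [[x y] td]; rewrite /dv /= => /orP[] /andP[/eqP -> hy].
- case: (eqVneq y p) => [->|yp].
    exists [:: ((i.+1, q), ~~ t); ((i.+1, p), td); ((i.+1, q), t)]; split.
      by rewrite /= /dv /= eqxx; apply/and4P; split => //; lia.
    exact: conjA.
  exists [:: ((i.+1, y), td)]; split.
    by rewrite /= /dv /= eqxx; apply/andP; split => //; lia.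
  apply: comm3 => //; apply: eps_comm => //.
  all: try first [done | by rewrite eq_sym | by rewrite neq_ltn; apply/orP; right; lia | by rewrite neq_ltn; apply/orP; left; lia].
- case: (eqVneq x p) => [->|xp].
    exists [:: ((i.+1, q), ~~ t); ((p, i.+1), td); ((i.+1, q), t)]; split.
      by rewrite /= /dv /= eqxx; apply/and4P; split => //; lia.
    exact: conjB.
  case: (eqVneq x q) => [->|xq].
    exists [:: ((i.+1, q), ~~ t); ((p, i.+1), ~~ td); ((i.+1, q), t); ((p, i.+1), td); ((q, i.+1), td)]; split.
      have q0 : 0 < q by case/andP: hq.
      have p0 : 0 < p by case/andP: hp.
      by rewrite /= /dv /= eqxx ltnn !andbF /= q0 p0 hp' hq'.
    exact: conjC.
  exists [:: ((x, i.+1), td)]; split.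
    by rewrite /= /dv /= eqxx orbC /=; apply/andP; split => //; lia.
  apply: comm3 => //; apply: eps_comm => //.
  all: try first [done | by rewrite eq_sym | by rewrite neq_ltn; apply/orP; right; lia | by rewrite neq_ltn; apply/orP; left; lia].
Qed.

Definition Cj i (G H : img) := forall D, DG i D -> DG i (comp (comp G D) H).

Lemma Cj_equiv i G G' H H' : G =~ G' -> H =~ H' -> Cj i G H -> Cj i G' H'.
Proof. by move=> hG hH C D /C; apply: DG_equiv; rewrite hG hH. Qed.

Lemma Cj_letter i e : lv i e -> Cj i (eimg e) (eimg (flipe e)).
Proof.
move=> he D [u [hu HD]].
have hne : e.1.1 != e.1.2 by case/and3P: he.
apply: (DG_equiv (J := imge ([:: e] ++ u ++ [:: flipe e]))).
  by rewrite HD !imge_cat !imge1 compA.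
elim: u hu {HD} => [|d u IH] /=.
  by move=> _; apply: DG_equiv (imge_pair hne) (DG_id _).
move=> /andP[hd hu].
have E : e :: d :: u ++ [:: flipe e] =
  [:: e; d] ++ u ++ [:: flipe e] by [].
rewrite E; apply: (DG_equiv (J := imge ([:: e; d] ++ [:: flipe e; e] ++ u ++ [:: flipe e]))).
  by rewrite imge_cancel'.
have -> : [:: e; d] ++ [:: flipe e; e] ++ u ++ [:: flipe e] =
  [:: e; d; flipe e] ++ ([:: e] ++ u ++ [:: flipe e]) by [].
apply: (DG_equiv (imge_cat _ _)); apply: DG_comp; last exact: IH.
have [v [hv Hv]] := Cj_base he hd.
by exists v.
Qed.

Lemma Cj_gen i g : gen (Lam_set i) g ->
  Cj i (imgw g) (imgw (vb_inv g)) /\ Cj i (imgw (vb_inv g)) (imgw g).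
Proof.
elim => [|w [k [l [hk hl kl ->]]]|u v _ [Hu Hu'] _ [Hv Hv']|u _ [Hu Hu']].
- by split => D HD; apply: DG_equiv HD; rewrite /= compI1 comp1I.
- have lk : l != k by rewrite eq_sym.
  have hlv : lv i ((l, k), true) by rewrite /lv /= hk hl lk.
  have hlv' : lv i ((l, k), false) by rewrite /lv /= hk hl lk.
  have h1 : imgw (lamw k l) =~ eimg ((l, k), true) by exact: lamw_img.
  have h2 : imgw (vb_inv (lamw k l)) =~ eimg ((l, k), false).
    by rewrite -(wd_img (e := ((l, k), false))).
  split.
    by apply: Cj_equiv (Cj_letter hlv); rewrite ?h1 ?h2.
  by apply: Cj_equiv (Cj_letter hlv'); rewrite ?h1 ?h2.
- rewrite vb_inv_cat; split => D HD.
    apply: DG_equiv (Hu _ (Hv _ HD)).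
    by rewrite !imgw_cat !compA.
  apply: DG_equiv (Hv' _ (Hu' _ HD)).
  by rewrite !imgw_cat !compA.
- by rewrite vb_invK; split.
Qed.

Lemma Vstar_DG i w : Vstar i w -> DG i (imgw w).
Proof.
apply: DG_gen => w' [g [h [hg hh ->]]].
apply: (DG_equiv (J := comp (comp (imgw g) (imgw h)) (imgw (vb_inv g)))).
  by rewrite !imgw_cat compA.
apply: (Cj_gen hg).1.
apply: DG_gen hh => w'' [k [hk [->|->]]].
- exists [:: ((i.+1, k), true)]; split.
    by rewrite /= /dv /= eqxx hk.
  rewrite imge1 lamw_img //; lia.
- exists [:: ((k, i.+1), true)]; split.
    by rewrite /= /dv /= eqxx hk orbT.
  rewrite imge1 lamw_img //; lia.
Qed.

Lemma part2f n i f : 0 < i < n -> phi_img n (Vstar i) f -> D_set n i f.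
Proof.
move=> hi [w [hw Hf]].
case: w hw Hf => [|g w] hw Hf.
  by exists [::]; split.
have [u [hu Hu]] := Vstar_DG hw.
exists [:: ((i.+1, 1), true), ((i.+1, 1), false) & u]; split.
  by rewrite /= hu eqxx /=; case/andP: hi => -> _.
move=> v hv'; rewrite Hf // phiw_subst epsw_subst; apply: subst_equiv.
rewrite Hu.
have := imge_cancel [::] u (e := ((i.+1, 1), true)).
rewrite /flipe /= => -> //.
by case/andP: hi => h _; rewrite neq_ltn; apply/orP; right; lia.
Qed.

Lemma wd_gen i e : dv i e -> gen (V_set i) (wd e).
Proof.
case: e => [[x y] t]; rewrite /dv /wd /= => /orP[] /andP[/eqP -> hy].
- have hg : gen (V_set i) (lamw y i.+1) by apply: gen_in; exists y; split => //; left.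
  by case: t => //; apply: gen_inv.
- have hg : gen (V_set i) (lamw i.+1 x) by apply: gen_in; exists x; split => //; right.
  by case: t => //; apply: gen_inv.
Qed.

Lemma part2b n i f : D_set n i f -> phi_img n (Vstar i) f.
Proof.
move=> [u [hu Hf]].
case: u hu Hf => [|e u] hu Hf.
  by exists [::]; split; [exact: gen_nil | exact: Hf].
have hu' : all (fun e => e.1.1 != e.1.2) (e :: u) by apply: sub_all hu => e'; apply: dv_neq.
have he : e.1.1 != e.1.2 by case/andP: hu'.
have [g [w Hw]] := wd_nonnil he.
have hgen : gen (V_set i) (flatten (map wd (e :: u))).
  elim: (e :: u) hu {Hf hu' Hw} => [|e' u' IH] /=; first by move=> _; exact: gen_nil.
  by move=> /andP[h1 h2]; apply: gen_cat; [exact: wd_gen | exact: IH].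
exists (g :: w ++ flatten (map wd u)); split.
  apply: gen_in; exists [::], (g :: w ++ flatten (map wd u)); split.
  - exact: gen_nil.
  - by rewrite -cat_cons -Hw.
  - by rewrite /= cats0.
move=> v hv; rewrite Hf // epsw_subst phiw_subst; apply: subst_equiv.
by rewrite -cat_cons -Hw -[wd e ++ _]/(flatten (map wd (e :: u))) flat_img.
Qed.

Theorem corollary3 (n : nat) :
  (forall f : aut, phi_img n (VPword n) f <-> Cb_set n f) /\
  (forall i : nat, 0 < i < n ->
     forall f : aut, phi_img n (Vstar i) f <-> D_set n i f).
Proof.
split.
  by move=> f; split; [exact: part1f | exact: part1b].
by move=> i hi f; split; [exact: part2f | exact: part2b].
Qed.
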